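(* Let $G=(V,E)$ be a finite connected graph with $n=|V|\ge 2$ vertices, distance matrix $D$, and diameter $L=\mathrm{diam}(G)$. Let $K\in\mathbb{R}_{\ge 0}^n$ be any solution of $DK=n\mathbf{1}_n$. Then $$\min_i K_i\cdot \mathrm{diam}(G)\le 2,$$ i.e. $\mathrm{diam}(G)\le 2/\min_iK_i$ whenever $\min_i K_i>0$. Moreover, if $\min_i K_i=2/L$, then $K_i=2/L$ for all $i$ (the solution is constant).
   Context: All graphs are finite, simple, connected and undirected, with the combinatorial shortest-path distance $d$. For $V=\{v_1,\dots,v_n\}$, $D=(d(v_i,v_j))_{i,j=1}^n$ is the distance matrix and $\mathbf{1}_n$ the all-ones column vector of length $n$. *)

(* Defs.v *)
From HB Require Import structures.
From mathcomp Require Import all_boot all_order all_algebra.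
Set Implicit Arguments. Unset Strict Implicit. Unset Printing Implicit Defensive.
Import Order.TTheory GRing.Theory Num.Theory.

Definition simple_graph (T : finType) (e : rel T) : Prop :=
  symmetric e /\ irreflexive e.

Definition connected_graph (T : finType) (e : rel T) : Prop :=
  forall x y : T, connect e x y.

(* Shortest-path distance: the least k < #|T| such that there is a walk
   x = p_0, p_1, ..., p_k = y with consecutive vertices adjacent
   (a shortest walk in a connected graph has length < #|T|);
   the default #|T| is only reached for disconnected pairs. *)
Definition gdist (T : finType) (e : rel T) (x y : T) : nat :=
  \big[minn/#|T|]_(k < #|T| | [exists p : k.-tuple T, path e x p && (last x p == y)]) k.

Definition gdiam (T : finType) (e : rel T) : nat :=
  \max_(x : T) \max_(y : T) gdist e x y.

Definition vmin (R : realFieldType) (T : finType) (K : T -> R) : R :=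
  match [pick x : T] with
  | Some x0 => \big[Num.min/K x0]_(i : T) K i
  | None => 0
  end.

(* Main.v *)
Require Import Defs.
From mathcomp Require Import all_boot all_order all_algebra.
From mathcomp Require Import ring lra.
Import Order.TTheory GRing.Theory Num.Theory.
Section G.
Variables (T : finType) (e : rel T).

Lemma gdist_card x y : (gdist e x y <= #|T|)%N.
Proof.
rewrite /gdist; apply: (big_ind (fun v => v <= #|T|)%N) => //.
  by move=> a b Ha Hb; rewrite geq_min Ha.
by move=> i _; apply: ltnW.
Qed.

Lemma bigmin_le_seq (I : eqType) (r : seq I) (P : pred I) (F : I -> nat) d i :
  i \in r -> P i -> (\big[minn/d]_(j <- r | P j) F j <= F i)%N.
Proof.
elim: r => [|a r IH] //; rewrite in_cons big_cons => /orP [/eqP <- -> | Hi Pi].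
  by rewrite geq_minl.
case: (P a); last exact: IH.
by rewrite geq_min (IH Hi Pi) orbT.
Qed.

Lemma gdist_le x y p : path e x p -> last x p = y -> (gdist e x y <= size p)%N.
Proof.
move=> Hp Hl; case: (ltnP (size p) #|T|) => Hs; last first.
  exact: leq_trans (gdist_card x y) Hs.
rewrite /gdist; apply: (@bigmin_le_seq _ _ _ (fun k : 'I_#|T| => nat_of_ord k) _ (Ordinal Hs)) => /=.
  by rewrite mem_index_enum.
apply/existsP; exists (Tuple (eqxx (size p))) => /=.
by rewrite Hp Hl eqxx.
Qed.

Lemma gdist_att x y : (gdist e x y < #|T|)%N ->
  exists p, [/\ path e x p, last x p = y & size p = gdist e x y].
Proof.
have : (gdist e x y == #|T|) || [exists k : 'I_#|T|,
   [exists p : k.-tuple T, path e x p && (last x p == y)] && (gdist e x y == k)].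
  rewrite /gdist; apply: (big_ind (fun v => (v == #|T|) || [exists k : 'I_#|T|,
   [exists p : k.-tuple T, path e x p && (last x p == y)] && (v == k)])).
  - by rewrite eqxx.
  - move=> a b Ha Hb; rewrite /minn; by case: ltnP.
  - move=> i Hi; apply/orP; right; apply/existsP; exists i; by rewrite Hi eqxx.
case/orP=> [/eqP -> | ]; first by rewrite ltnn.
move=> /existsP [k /andP [/existsP [p /andP [Hp /eqP Hl]] /eqP Hk]] _.
by exists p; rewrite Hp Hl size_tuple Hk.
Qed.

Lemma gdist_tri x y z : (gdist e x z <= gdist e x y + gdist e y z)%N.
Proof.
case: (ltnP (gdist e x y) #|T|) => H1; last first.
  by apply: leq_trans (gdist_card _ _) (leq_trans H1 (leq_addr _ _)).
case: (ltnP (gdist e y z) #|T|) => H2; last first.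
  by apply: leq_trans (gdist_card _ _) (leq_trans H2 (leq_addl _ _)).
have [p [Hp Hpl <-]] := @gdist_att x y H1.
have [q [Hq Hql <-]] := @gdist_att y z H2.
rewrite -size_cat; apply: gdist_le; first by rewrite cat_path Hp Hpl Hq.
by rewrite last_cat Hpl.
Qed.

Lemma gdist_sym_le x y : symmetric e -> (gdist e y x <= gdist e x y)%N.
Proof.
move=> He.
case: (ltnP (gdist e x y) #|T|) => H1; last first.
  exact: leq_trans (gdist_card _ _) H1.
have [p [Hp Hpl <-]] := @gdist_att x y H1.
rewrite -(size_belast x p) -(size_rev (belast x p)).
apply: gdist_le.
  by rewrite -Hpl rev_path (@eq_path _ _ e) // => a b; rewrite /= He.
rewrite -Hpl; case/lastP: p {Hp Hpl} => [|q z] //=.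
by rewrite belast_rcons rev_cons last_rcons.
Qed.
End G.

Local Open Scope ring_scope.

Lemma bigminr_le_seq (R : realFieldType) (I : eqType) (r : seq I) (F : I -> R) d i :
  i \in r -> \big[Num.min/d]_(j <- r) F j <= F i.
Proof.
elim: r => [|a r IH] //; rewrite in_cons big_cons => /orP [/eqP <- | Hi].
  by rewrite ge_min lexx.
by rewrite ge_min (IH Hi) orbT.
Qed.

Lemma vmin_le (R : realFieldType) (T : finType) (K : T -> R) i :
  (forall j, 0 <= K j) -> vmin K <= K i.
Proof.
move=> H; rewrite /vmin; case: pickP => [x0 _|_]; last exact: H.
by apply: bigminr_le_seq; rewrite mem_index_enum.
Qed.

Theorem mainTheorem7 (R : realFieldType) (T : finType) (e : rel T)
  (Hsimple : simple_graph e) (Hconn : connected_graph e)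
  (Hn : (2 <= #|T|)%N) (K : T -> R)
  (HKnn : forall i, 0 <= K i)
  (HDK : forall i, \sum_(j : T) (gdist e i j)%:R * K j = (#|T|)%:R) :
  vmin K * (gdiam e)%:R <= 2 /\
  (vmin K = 2 / (gdiam e)%:R -> forall i, K i = 2 / (gdiam e)%:R).
Proof.
have Hn0 : (0 < #|T|)%N by apply: ltnW.
have hm := fun i => @vmin_le R T K i HKnn.
have hdL : forall i j, (gdist e i j <= gdiam e)%N.
  move=> i j; apply: leq_trans (leq_bigmax i).
  exact: (leq_bigmax (F := fun y => gdist e i y) j).
have [u Hu] := @bigop.eq_bigmax T (fun x => \max_y gdist e x y) Hn0.
have [v Hv] := @bigop.eq_bigmax T (gdist e u) Hn0.
have HL : gdiam e = gdist e u v by rewrite /gdiam Hu Hv.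
have HLpos : (0 < gdiam e)%N.
  rewrite lt0n; apply/negP => /eqP H0.
  have := HDK u.
  rewrite big1 => [/eqP|j _]; last first.
    by have := hdL u j; rewrite H0 leqn0 => /eqP ->; rewrite mul0r.
  by rewrite eq_sym pnatr_eq0 eqn0Ngt Hn0.
set L := gdiam e in HL HLpos hdL *.
set m := vmin K in hm *.
set n := #|T| in Hn Hn0 HDK *.
set S := \sum_(j : T) K j.
have H1 : L%:R * S <= 2 * n%:R.
  have -> : 2 * n%:R = \sum_(j : T) ((gdist e u j + gdist e v j)%N%:R * K j) :> R.
    rewrite (eq_bigr (fun j => (gdist e u j)%:R * K j + (gdist e v j)%:R * K j)); last first.
      by move=> j _; rewrite natrD mulrDl.
    by rewrite big_split /= !HDK mulrDl mul1r.
  rewrite /S mulr_sumr; apply: ler_sum => j _; apply: ler_wpM2r => //.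
  rewrite ler_nat HL; apply: leq_trans (@gdist_tri _ e u j v) _.
  by rewrite leq_add2l; apply: gdist_sym_le; case: Hsimple.
have H2 : n%:R * m <= S.
  have -> : n%:R * m = \sum_(j : T) m by rewrite sumr_const mulr_natl.
  by apply: ler_sum => j _; apply: hm.
have Hn0R : 0 < n%:R :> R by rewrite ltr0n.
have HL0R : 0 < L%:R :> R by rewrite ltr0n.
split; first by nra.
move=> Hm i.
have HmL : m * L%:R = 2 by rewrite Hm mulfVK // gt_eqF.
have HS : S = n%:R * m by apply/eqP; rewrite eq_le H2 andbT; nra.
have Hsum : \sum_(j : T) (K j - m) = 0.
  by rewrite sumrB -/S HS sumr_const mulr_natl subrr.
have Hpos : forall j : T, predT j -> 0 <= K j - m by move=> j _; rewrite subr_ge0.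
have := @psumr_eq0P _ _ predT (fun j => K j - m) Hpos Hsum i isT.
by rewrite -Hm => /eqP; rewrite subr_eq0 => /eqP.
Qed.
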